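(* Let $A$ be a ring with a nilpotent two-sided ideal $\mathfrak{a}$, and assume the ring $\operatorname{gr}_{\mathfrak{a}}(A)=\bigoplus_{i\ge0}\mathfrak{a}^i/\mathfrak{a}^{i+1}$ is commutative. Let $s\in A$. (1) The set $\{s^j\}_{j\ge0}$ is a denominator set in $A$; let $A_s$ be the resulting ring of fractions. (2) Let $\bar A:=A/\mathfrak{a}$, let $\bar s$ be the image of $s$ in $\bar A$, and let $\mathfrak{a}_s$ be the kernel of the canonical ring surjection $A_s\to\bar A_{\bar s}$. Then $\mathfrak{a}_s=\mathfrak{a}A_s=A_s\mathfrak{a}$, and this is a nilpotent ideal. (3) For any $a\in A$ with image $\bar a\in\bar A$, the element $a$ is invertible in $A_s$ if and only if $\bar a$ is invertible in $\bar A_{\bar s}$.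
   Context: A subset $S$ of a ring $A$ is a denominator set if it is multiplicatively closed and satisfies the left and right Ore conditions and the left and right torsion conditions; then the (Ore) ring of fractions $A_S$ exists, with $A\to A_S$ making elements of $S$ invertible, universal for this property, with every element of the form $a_1s_1^{-1}=s_2^{-1}a_2$. *)

(* Defs.v *)
From HB Require Import structures.
From mathcomp Require Import all_boot all_order all_algebra.
Set Implicit Arguments. Unset Strict Implicit. Unset Printing Implicit Defensive.
Import GRing.Theory.
Local Open Scope ring_scope.

Section Defs.
Variable T : pzRingType.

Definition is_ideal (I : T -> Prop) : Prop :=
  [/\ I 0, (forall x y, I x -> I y -> I (x + y)) &
      (forall x y, I y -> I (x * y) /\ I (y * x))].

(* ideal power I^n : I^0 = T, I^(n+1) = additive span of {x*y | x in I^n, y in I} *)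
Inductive ipow (I : T -> Prop) : nat -> T -> Prop :=
| ipow_0 x : ipow I 0 x
| ipow_zero n : ipow I n.+1 0
| ipow_mul n x y : ipow I n x -> I y -> ipow I n.+1 (x * y)
| ipow_add n x y : ipow I n.+1 x -> ipow I n.+1 y -> ipow I n.+1 (x + y).

Definition nilpotent_ideal (I : T -> Prop) : Prop :=
  exists n, forall x, ipow I n x -> x = 0.

(* gr_I(T) = (+)_i I^i/I^(i+1) is commutative: the product of the classes of
   homogeneous elements x in I^i, y in I^j, namely the class of xy in
   I^(i+j)/I^(i+j+1), equals that of yx (homogeneous elements generate). *)
Definition gr_commutative (I : T -> Prop) : Prop :=
  forall i j x y, ipow I i x -> ipow I j y -> ipow I (i + j).+1 (x * y - y * x).

Definition is_unit (x : T) : Prop := exists y, x * y = 1 /\ y * x = 1.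

Definition powers (s : T) : T -> Prop := fun t => exists j : nat, t = s ^+ j.

Definition mult_closed (S : T -> Prop) : Prop :=
  S 1 /\ (forall x y, S x -> S y -> S (x * y)).

Definition right_ore (S : T -> Prop) : Prop :=
  forall a s, S s -> exists b t, S t /\ a * t = s * b.
Definition left_ore (S : T -> Prop) : Prop :=
  forall a s, S s -> exists b t, S t /\ t * a = b * s.
Definition right_torsion (S : T -> Prop) : Prop :=
  forall a s, S s -> s * a = 0 -> exists t, S t /\ a * t = 0.
Definition left_torsion (S : T -> Prop) : Prop :=
  forall a s, S s -> a * s = 0 -> exists t, S t /\ t * a = 0.

Definition denominator_set (S : T -> Prop) : Prop :=
  [/\ mult_closed S, left_ore S, right_ore S, left_torsion S & right_torsion S].
End Defs.

Definition ring_of_fractions (A B : pzRingType) (S : A -> Prop)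
    (f : {rmorphism A -> B}) : Prop :=
  [/\ (forall s, S s -> is_unit (f s)),
      (forall (C : pzRingType) (g : {rmorphism A -> C}),
          (forall s, S s -> is_unit (g s)) ->
          (exists h : {rmorphism B -> C}, forall a, h (f a) = g a) /\
          (forall h1 h2 : {rmorphism B -> C},
              (forall a, h1 (f a) = g a) -> (forall a, h2 (f a) = g a) ->
              forall b, h1 b = h2 b)) &
      (forall b : B, (exists a1 s1 u1, [/\ S s1, f s1 * u1 = 1, u1 * f s1 = 1
                                          & b = f a1 * u1]) /\
                     (exists a2 s2 u2, [/\ S s2, f s2 * u2 = 1, u2 * f s2 = 1
                                          & b = u2 * f a2]))].

(* I.B : the right ideal of B generated by f(I) (finite sums of f(x) b) *)
Inductive right_ext (A B : pzRingType) (f : A -> B) (I : A -> Prop) : B -> Prop :=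
| rext_0 : right_ext f I 0
| rext_mul x b : I x -> right_ext f I (f x * b)
| rext_add u v : right_ext f I u -> right_ext f I v -> right_ext f I (u + v).

(* B.I : the left ideal of B generated by f(I) *)
Inductive left_ext (A B : pzRingType) (f : A -> B) (I : A -> Prop) : B -> Prop :=
| lext_0 : left_ext f I 0
| lext_mul x b : I x -> left_ext f I (b * f x)
| lext_add u v : left_ext f I u -> left_ext f I v -> left_ext f I (u + v).

(* Main.v *)
Require Import Defs.
From HB Require Import structures.
From mathcomp Require Import all_boot all_order all_algebra.
From Stdlib Require Import ClassicalEpsilon FunctionalExtensionality PropExtensionality.
Import GRing.Theory.
Local Open Scope ring_scope.
Set Implicit Arguments. Unset Strict Implicit. Unset Printing Implicit Defensive.


Section IpowLemmas.
Variable T : pzRingType.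
Variable I : T -> Prop.
Hypothesis HI : is_ideal I.

Lemma ipow0el n : ipow I n 0.
Proof. by case: n => [|n]; constructor. Qed.

Lemma ipow_addc n x y : ipow I n x -> ipow I n y -> ipow I n (x + y).
Proof. by case: n => [|n] Hx Hy; constructor. Qed.

Lemma ipow_mulr n x z : ipow I n x -> ipow I n (x * z).
Proof.
case: HI => _ _ Hm.
elim=> {n x} [x|n|n x y Hx IHx Hy|n x y _ IHx _ IHy].
- by constructor.
- by rewrite mul0r; constructor.
- by rewrite -mulrA; constructor => //; case: (Hm z y Hy).
- by rewrite mulrDl; constructor.
Qed.

Lemma ipow_mull n x z : ipow I n x -> ipow I n (z * x).
Proof.
elim=> {n x} [x|n|n x y Hx IHx Hy|n x y _ IHx _ IHy].
- by constructor.
- by rewrite mulr0; constructor.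
- by rewrite mulrA; constructor.
- by rewrite mulrDr; constructor.
Qed.

Lemma ipowN n x : ipow I n x -> ipow I n (- x).
Proof. by move=> H; rewrite -mulrN1; apply: ipow_mulr. Qed.

Lemma ipowB n x y : ipow I n x -> ipow I n y -> ipow I n (x - y).
Proof. by move=> Hx Hy; apply: ipow_addc => //; apply: ipowN. Qed.

Lemma ipow_S_aux m x : ipow I m x -> forall n, m = n.+1 -> ipow I n x.
Proof.
elim=> {m x} [x|n|n x y Hx IHx Hy|n x y _ IHx _ IHy] k //= [E]; subst.
- exact: ipow0el.
- exact: ipow_mulr.
- by apply: ipow_addc; [apply: IHx|apply: IHy].
Qed.

Lemma ipow_S n x : ipow I n.+1 x -> ipow I n x.
Proof. by move=> H; apply: (ipow_S_aux H). Qed.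

Lemma ipow_le m n x : (m <= n)%N -> ipow I n x -> ipow I m x.
Proof.
move=> Hmn; rewrite -(subnK Hmn); elim: (n - m)%N => [|k IH] //= H.
by apply: IH; apply: ipow_S.
Qed.

Lemma ipow1 x : I x <-> ipow I 1 x.
Proof.
case: HI => H0 Ha Hm; split=> [Hx|].
  by rewrite -(mul1r x); constructor => //; constructor.
move=> H; have: forall m, ipow I m x -> m = 1%N -> I x.
  move=> m; elim=> {m x H} [x|n|n x y Hx IHx Hy|n x y _ IHx _ IHy] //= [E]; subst.
  - by case: (Hm x y Hy).
  - by apply: Ha; [apply: IHx|apply: IHy].
by move=> /(_ 1%N H); apply.
Qed.

End IpowLemmas.


Section Ore.
Variable A : pzRingType.
Variable I : A -> Prop.
Hypothesis HI : is_ideal I.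
Variable N : nat.
Hypothesis HN : forall x, ipow I N x -> x = 0.
Hypothesis Hgr : gr_commutative I.
Variable s : A.

Lemma d_in k a : ipow I k a -> ipow I k.+1 (s * a - a * s).
Proof. by move=> H; have := Hgr (ipow_0 I s) H; rewrite add0n. Qed.

Lemma level_ind (P : nat -> A -> Prop) :
  (forall k a, (N <= k)%N -> ipow I k a -> P k a) ->
  (forall k a, (k < N)%N -> (forall b, ipow I k.+1 b -> P k.+1 b) -> ipow I k a -> P k a) ->
  forall k a, ipow I k a -> P k a.
Proof.
move=> H0 HS.
have main : forall n k, (N <= k + n)%N -> forall a, ipow I k a -> P k a.
  elim=> [|n IH] k Hk a Ha; first by apply: H0 => //; rewrite -(addn0 k).
  case: (leqP N k) => Hn; first by apply: H0.
  apply: HS => // b Hb; apply: (IH k.+1) => //; by rewrite addSn -addnS.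
by move=> k a; apply: (main N k); rewrite leq_addl.
Qed.

Lemma vanish k a : (N <= k)%N -> ipow I k a -> a = 0.
Proof. by move=> Hk Ha; apply: HN; apply: (ipow_le HI Hk). Qed.

Lemma ore_r1 k a : ipow I k a -> exists m b, ipow I k b /\ a * s ^+ m = s * b.
Proof.
move: k a; apply: level_ind.
  move=> k a Hk Ha; exists 0%N, 0; split; first exact: ipow0el.
  by rewrite (vanish Hk Ha) mul0r mulr0.
move=> k a Hk IH Ha.
have [m [b [Hb E]]] := IH _ (d_in Ha).
exists m.+1, (a * s ^+ m - b); split.
  by apply: ipowB => //; [apply: ipow_mulr|apply: ipow_S].
rewrite exprS mulrBr -E mulrBl !mulrA opprB addrC subrK.
by [].
Qed.
Lemma ore_r k a j : ipow I k a -> exists m b, ipow I k b /\ a * s ^+ m = s ^+ j * b.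
Proof.
elim: j a => [|j IH] a Ha; first by exists 0%N, a; rewrite expr0 mulr1 mul1r.
have [m [b [Hb E]]] := IH a Ha.
have [m' [b' [Hb' E']]] := ore_r1 Hb.
exists (m + m')%N, b'; split => //.
by rewrite exprD mulrA E -mulrA E' mulrA -exprSr.
Qed.

Lemma ore_l1 k a : ipow I k a -> exists m b, ipow I k b /\ s ^+ m * a = b * s.
Proof.
move: k a; apply: level_ind.
  move=> k a Hk Ha; exists 0%N, 0; split; first exact: ipow0el.
  by rewrite (vanish Hk Ha) mul0r mulr0.
move=> k a Hk IH Ha.
have [m [b [Hb E]]] := IH _ (d_in Ha).
exists m.+1, (s ^+ m * a + b); split.
  by apply: ipow_addc => //; [apply: ipow_mull|apply: ipow_S].
rewrite exprSr mulrDl -E -!mulrA -mulrDr; congr (_ * _).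
by rewrite addrC subrK.
Qed.

Lemma ore_l k a j : ipow I k a -> exists m b, ipow I k b /\ s ^+ m * a = b * s ^+ j.
Proof.
elim: j a => [|j IH] a Ha; first by exists 0%N, a; rewrite expr0 mulr1 mul1r.
have [m [b [Hb E]]] := IH a Ha.
have [m' [b' [Hb' E']]] := ore_l1 Hb.
exists (m' + m)%N, b'; split => //.
by rewrite exprD -mulrA E mulrA E' -mulrA -exprS.
Qed.

Lemma tors_r_aux k a : ipow I k a -> forall j, s ^+ j * a = 0 -> exists m, a * s ^+ m = 0.
Proof.
move: k a; apply: level_ind.
  by move=> k a Hk Ha j _; exists 0%N; rewrite (vanish Hk Ha) mul0r.
move=> k a Hk IH Ha j E.
have Ed : s ^+ j * (s * a - a * s) = 0.
  by rewrite mulrBr mulrA -exprSr exprS -mulrA E mulr0 mulrA E mul0r subrr.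
have [m Em] := IH _ (d_in Ha) j Ed.
have C : GRing.comm (a * s ^+ m) s.
  rewrite /GRing.comm -mulrA -exprSr exprS !mulrA.
  by apply/eqP; rewrite eq_sym -subr_eq0 -mulrBl Em.
exists (m + j)%N.
by rewrite exprD mulrA (commrX j C) mulrA E mul0r.
Qed.

Lemma tors_l_aux k a : ipow I k a -> forall j, a * s ^+ j = 0 -> exists m, s ^+ m * a = 0.
Proof.
move: k a; apply: level_ind.
  by move=> k a Hk Ha j _; exists 0%N; rewrite (vanish Hk Ha) mulr0.
move=> k a Hk IH Ha j E.
have Ed : (s * a - a * s) * s ^+ j = 0.
  by rewrite mulrBl -mulrA E mulr0 -mulrA -exprS exprSr mulrA E mul0r subrr.
have [m Em] := IH _ (d_in Ha) j Ed.
have C : GRing.comm (s ^+ m * a) s.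
  rewrite /GRing.comm mulrA -exprS exprSr -!mulrA.
  by apply/eqP; rewrite eq_sym -subr_eq0 -mulrBr Em.
exists (j + m)%N.
by rewrite exprD -mulrA -(commrX j C) -mulrA E mulr0.
Qed.

Lemma denom : denominator_set (powers s).
Proof.
split.
- split; first by exists 0%N.
  by move=> x y [i ->] [j ->]; exists (i + j)%N; rewrite exprD.
- move=> a t [j ->]; have [m [b [_ E]]] := ore_l j (ipow_0 I a).
  by exists b, (s ^+ m); split => //; exists m.
- move=> a t [j ->]; have [m [b [_ E]]] := ore_r j (ipow_0 I a).
  by exists b, (s ^+ m); split => //; exists m.
- move=> a t [j ->] E; have [m Em] := tors_l_aux (ipow_0 I a) E.
  by exists (s ^+ m); split => //; exists m.
- move=> a t [j ->] E; have [m Em] := tors_r_aux (ipow_0 I a) E.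
  by exists (s ^+ m); split => //; exists m.
Qed.
End Ore.


Record tideal (T : pzRingType) := TIdeal { tpred : T -> Prop; tprop : is_ideal tpred }.

Section Quot.
Variable T : pzRingType.
Variable K : tideal T.
Local Notation J := (tpred K).
Let HJ : is_ideal J := tprop K.

Lemma J0 : J 0. Proof. by case: HJ. Qed.
Lemma JD x y : J x -> J y -> J (x + y). Proof. by case: HJ => _ H _; apply: H. Qed.
Lemma JMl x y : J y -> J (x * y). Proof. by case: HJ => _ _ H Hy; case: (H x y Hy). Qed.
Lemma JMr x y : J y -> J (y * x). Proof. by case: HJ => _ _ H Hy; case: (H x y Hy). Qed.
Lemma JN x : J x -> J (- x). Proof. by move=> H; rewrite -mulN1r; apply: JMl. Qed.
Lemma JB x y : J x -> J y -> J (x - y). Proof. by move=> Hx Hy; apply: JD => //; apply: JN. Qed.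

Definition rep (x : T) : T := epsilon (inhabits 0) (fun y => J (x - y)).

Lemma rep_spec x : J (x - rep x).
Proof. apply: (epsilon_spec (inhabits 0) (fun y => J (x - y))); exists x; rewrite subrr; exact: J0. Qed.

Lemma rep_spec' x : J (rep x - x).
Proof. by rewrite -opprB; apply: JN; apply: rep_spec. Qed.

Lemma rep_eq x y : J (x - y) -> rep x = rep y.
Proof.
move=> H; rewrite /rep; congr epsilon.
apply: functional_extensionality => z; apply: propositional_extensionality.
split=> Hz.
  by have := JB Hz H; rewrite opprB addrC addrA subrK.
by have := JD H Hz; rewrite addrA subrK.
Qed.

Lemma rep_idem x : rep (rep x) = rep x.
Proof. by apply: rep_eq; rewrite -opprB; apply: JN; apply: rep_spec. Qed.

Definition Q := {x : T | rep x == x}.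
HB.instance Definition _ := Choice.on Q.

Definition mk (x : T) : Q := exist _ (rep x) (introT eqP (rep_idem x)).

Lemma mk_val (a : Q) : mk (val a) = a.
Proof. by apply: val_inj => /=; apply/eqP; case: a. Qed.

Lemma mk_eq x y : mk x = mk y <-> J (x - y).
Proof.
split; last by move=> H; apply: val_inj => /=; apply: rep_eq.
move=> /(congr1 val) /= E.
have := JB (rep_spec x) (rep_spec y).
by rewrite E opprB addrA subrK.
Qed.

Definition zeroQ := mk 0.
Definition oneQ := mk 1.
Definition addQ (a b : Q) := mk (val a + val b).
Definition oppQ (a : Q) := mk (- val a).
Definition mulQ (a b : Q) := mk (val a * val b).

Lemma addQ_mk x y : addQ (mk x) (mk y) = mk (x + y).
Proof.
apply/mk_eq => /=.
by rewrite opprD addrACA; apply: JD; apply: rep_spec'.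
Qed.

Lemma oppQ_mk x : oppQ (mk x) = mk (- x).
Proof.
apply/mk_eq => /=; have := rep_spec x.
by rewrite opprK addrC.
Qed.

Lemma mulQ_mk x y : mulQ (mk x) (mk y) = mk (x * y).
Proof.
apply/mk_eq => /=.
have H : rep x * rep y - x * y = - ((x - rep x) * rep y + x * (y - rep y)).
  by rewrite mulrBl mulrBr opprD !opprB addrA subrK.
rewrite H; apply: JN; apply: JD; [apply: JMr|apply: JMl]; exact: rep_spec.
Qed.

Lemma Q_addA : associative addQ.
Proof. by move=> a b c; rewrite -[a]mk_val -[b]mk_val -[c]mk_val !addQ_mk addrA. Qed.
Lemma Q_addC : commutative addQ.
Proof. by move=> a b; rewrite -[a]mk_val -[b]mk_val !addQ_mk addrC. Qed.
Lemma Q_add0 : left_id zeroQ addQ.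
Proof. by move=> a; rewrite -[a]mk_val /zeroQ addQ_mk add0r. Qed.
Lemma Q_addN : left_inverse zeroQ oppQ addQ.
Proof. by move=> a; rewrite -[a]mk_val oppQ_mk addQ_mk addNr. Qed.
Lemma Q_mulA : associative mulQ.
Proof. by move=> a b c; rewrite -[a]mk_val -[b]mk_val -[c]mk_val !mulQ_mk mulrA. Qed.
Lemma Q_mul1 : left_id oneQ mulQ.
Proof. by move=> a; rewrite -[a]mk_val /oneQ mulQ_mk mul1r. Qed.
Lemma Q_mulr1 : right_id oneQ mulQ.
Proof. by move=> a; rewrite -[a]mk_val /oneQ mulQ_mk mulr1. Qed.
Lemma Q_mulDl : left_distributive mulQ addQ.
Proof. by move=> a b c; rewrite -[a]mk_val -[b]mk_val -[c]mk_val !(addQ_mk, mulQ_mk) mulrDl. Qed.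
Lemma Q_mulDr : right_distributive mulQ addQ.
Proof. by move=> a b c; rewrite -[a]mk_val -[b]mk_val -[c]mk_val !(addQ_mk, mulQ_mk) mulrDr. Qed.

HB.instance Definition _ := GRing.isPzRing.Build Q Q_addA Q_addC Q_add0 Q_addN
  Q_mulA Q_mul1 Q_mulr1 Q_mulDl Q_mulDr.

Definition qmap (x : T) : Q := mk x.

Lemma qmap_zmod : zmod_morphism qmap.
Proof. by move=> x y; rewrite /qmap -[RHS]/(addQ (mk x) (oppQ (mk y))) oppQ_mk addQ_mk. Qed.
HB.instance Definition _ := GRing.isZmodMorphism.Build T Q qmap qmap_zmod.
Lemma qmap_monoid : GRing.monoid_morphism qmap.
Proof. by split=> // x y; rewrite /qmap -[RHS]/(mulQ (mk x) (mk y)) mulQ_mk. Qed.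
HB.instance Definition _ := GRing.isMonoidMorphism.Build T Q qmap qmap_monoid.

Lemma qmap_ker x : qmap x = 0 <-> J x.
Proof.
rewrite /qmap (_ : 0 = mk 0) //; rewrite mk_eq subr0 //.
Qed.

Lemma qmap_surj (a : Q) : exists x, qmap x = a.
Proof. by exists (val a); apply: mk_val. Qed.

End Quot.


Section Induced.
Variables (A B C : pzRingType) (pi : {rmorphism A -> B}) (h : {rmorphism A -> C}).
Hypothesis Hs : forall y, exists x, pi x = y.
Hypothesis Hk : forall x, pi x = 0 -> h x = 0.

Definition ind (y : B) : C := let _ := (Hs, Hk) in h (epsilon (inhabits 0) (fun x => pi x = y)).

Lemma ind_pi x : ind (pi x) = h x.
Proof.
rewrite /ind.
have E := epsilon_spec (inhabits 0) (fun z => pi z = pi x) (Hs (pi x)).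
apply/eqP; rewrite -subr_eq0 -rmorphB; apply/eqP; apply: Hk.
by rewrite rmorphB E subrr.
Qed.

Lemma ind_zmod : zmod_morphism ind.
Proof.
move=> y1 y2; have [x1 <-] := Hs y1; have [x2 <-] := Hs y2.
by rewrite -rmorphB !ind_pi rmorphB.
Qed.
HB.instance Definition _ := GRing.isZmodMorphism.Build B C ind ind_zmod.
Lemma ind_monoid : GRing.monoid_morphism ind.
Proof.
split; first by rewrite -(rmorph1 pi) ind_pi rmorph1.
move=> y1 y2; have [x1 <-] := Hs y1; have [x2 <-] := Hs y2.
by rewrite -rmorphM !ind_pi rmorphM.
Qed.
HB.instance Definition _ := GRing.isMonoidMorphism.Build B C ind ind_monoid.
End Induced.

Lemma unit_map (R S : pzRingType) (h : {rmorphism R -> S}) x : is_unit x -> is_unit (h x).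
Proof. by case=> y [E1 E2]; exists (h y); rewrite -!rmorphM E1 E2 rmorph1. Qed.

Lemma inv_uniq (R : pzRingType) (x l r : R) : l * x = 1 -> x * r = 1 -> l = r.
Proof. by move=> E1 E2; rewrite -[l]mulr1 -E2 mulrA E1 mul1r. Qed.

Lemma geom (R : pzRingType) (x : R) n : (1 - x) * (\sum_(i < n) x ^+ i) = 1 - x ^+ n.
Proof.
elim: n => [|n IH]; first by rewrite big_ord0 mulr0 expr0 subrr.
by rewrite big_ord_recr /= mulrDr IH mulrBl mul1r -exprS addrA subrK.
Qed.

Lemma geom' (R : pzRingType) (x : R) n : (\sum_(i < n) x ^+ i) * (1 - x) = 1 - x ^+ n.
Proof.
elim: n => [|n IH]; first by rewrite big_ord0 mul0r expr0 subrr.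
by rewrite big_ord_recr /= mulrDl IH mulrBr mulr1 -exprSr addrA subrK.
Qed.

Lemma nil_unit (R : pzRingType) (x : R) n : x ^+ n = 0 -> is_unit (1 + x).
Proof.
move=> E; exists (\sum_(i < n) (- x) ^+ i).
have := geom (-x) n; have := geom' (-x) n.
by rewrite opprK exprNn E mulr0 subr0 => -> ->.
Qed.



Lemma ipow_ext (T : pzRingType) (P R : T -> Prop) n x :
  (forall y, P y -> R y) -> ipow P n x -> ipow R n x.
Proof.
move=> H; elim=> {n x} [x|n|n x y Hx IHx Hy|n x y _ IHx _ IHy]; constructor => //.
exact: H.
Qed.

Lemma pow_ipow (T : pzRingType) (P : T -> Prop) z k : P z -> ipow P k (z ^+ k).
Proof.
move=> Hz; elim: k => [|k IH]; first by constructor.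
by rewrite exprSr; constructor.
Qed.

Section Main.
Variables (A : pzRingType) (I : A -> Prop) (s : A).
Hypotheses (HI : is_ideal I) (HN : nilpotent_ideal I) (Hgr : gr_commutative I).
Variables (As : pzRingType) (f : {rmorphism A -> As}).
Hypothesis Hf : ring_of_fractions (powers s) f.
Variables (Abar : pzRingType) (pi : {rmorphism A -> Abar}).
Hypotheses (Hpis : forall y, exists x, pi x = y) (Hpik : forall x, pi x = 0 <-> I x).
Variables (Abars : pzRingType) (g : {rmorphism Abar -> Abars}).
Hypothesis Hg : ring_of_fractions (powers (pi s)) g.
Variable phi : {rmorphism As -> Abars}.
Hypothesis Hphi : forall x, phi (f x) = g (pi x).

Local Notation Jr := (right_ext f I).
Local Notation Jl := (left_ext f I).

Lemma IM x y : I y -> I (x * y) /\ I (y * x).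
Proof. by case: HI => _ _; apply. Qed.

Lemma fsu j : exists w, f (s ^+ j) * w = 1 /\ w * f (s ^+ j) = 1.
Proof. by case: Hf => Hu _ _; apply: Hu; exists j. Qed.

Lemma keyR y u j : I y -> u * f (s ^+ j) = 1 -> Jr (u * f y).
Proof.
move=> Hy Hu; have [N HN'] := HN.
have [m [y' [Hy' E]]] := ore_r HI HN' Hgr s j (proj1 (ipow1 HI y) Hy).
have [w [Ew1 Ew2]] := fsu m.
have -> : u * f y = u * f (y * s ^+ m) * w by rewrite rmorphM -!mulrA Ew1 mulr1.
rewrite E rmorphM mulrA Hu mul1r.
by constructor; apply/(ipow1 HI).
Qed.

Lemma keyL y u j : I y -> f (s ^+ j) * u = 1 -> Jl (f y * u).
Proof.
move=> Hy Hu; have [N HN'] := HN.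
have [m [y' [Hy' E]]] := ore_l HI HN' Hgr s j (proj1 (ipow1 HI y) Hy).
have [w [Ew1 Ew2]] := fsu m.
have -> : f y * u = w * f (s ^+ m * y) * u by rewrite rmorphM !mulrA Ew2 mul1r.
rewrite E rmorphM -!mulrA Hu mulr1.
by constructor; apply/(ipow1 HI).
Qed.

Lemma Jr_rmul z c : Jr z -> Jr (z * c).
Proof.
elim=> [|x b Hx|u v _ IHu _ IHv].
- by rewrite mul0r; constructor.
- by rewrite -mulrA; constructor.
- by rewrite mulrDl; constructor.
Qed.

Lemma Jr_lmul b z : Jr z -> Jr (b * z).
Proof.
elim=> [|x c Hx|u v _ IHu _ IHv].
- by rewrite mulr0; constructor.
- case: Hf => _ _ /(_ b) [_ [a2 [s2 [u2 [[j ->] E1 E2 ->]]]]].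
  have -> : u2 * f a2 * (f x * c) = u2 * f (a2 * x) * c by rewrite rmorphM !mulrA.
  apply: Jr_rmul; apply: keyR E2; exact: (IM a2 Hx).1.
- by rewrite mulrDr; constructor.
Qed.

Lemma Jr_ideal : is_ideal Jr.
Proof.
split; first by constructor.
  by move=> x y Hx Hy; constructor.
by move=> x y Hy; split; [apply: Jr_lmul|apply: Jr_rmul].
Qed.

Lemma Jr_Jl z : Jr z -> Jl z.
Proof.
elim=> [|x b Hx|u v _ IHu _ IHv].
- by constructor.
- case: Hf => _ _ /(_ b) [[a1 [s1 [u1 [[j ->] E1 E2 ->]]]] _].
  rewrite mulrA -rmorphM; apply: keyL E1; exact: (IM a1 Hx).2.
- by constructor.
Qed.

Lemma Jl_Jr z : Jl z -> Jr z.
Proof.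
elim=> [|x b Hx|u v _ IHu _ IHv].
- by constructor.
- case: Hf => _ _ /(_ b) [_ [a2 [s2 [u2 [[j ->] E1 E2 ->]]]]].
  rewrite -mulrA -rmorphM; apply: keyR E2; exact: (IM a2 Hx).1.
- by constructor.
Qed.

Lemma ker_sup z : Jr z -> phi z = 0.
Proof.
elim=> [|x b Hx|u v _ IHu _ IHv].
- exact: rmorph0.
- by rewrite rmorphM Hphi (proj2 (Hpik x) Hx) !rmorph0 mul0r.
- by rewrite rmorphD IHu IHv addr0.
Qed.

Lemma fs_unit t : powers s t -> is_unit (f t).
Proof. by case: Hf => Hu _ _; apply: Hu. Qed.

Lemma ker_sub z : phi z = 0 -> Jr z.
Proof.
move=> Hz.
pose K := TIdeal Jr_ideal.
pose q : {rmorphism As -> Q K} := qmap K.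
pose h : {rmorphism A -> Q K} := (q \o f)%FUN.
have hk : forall x, pi x = 0 -> h x = 0.
  move=> x /Hpik Hx; rewrite /h /= /q qmap_ker /=.
  by rewrite -(mulr1 (f x)); constructor.
pose rho : {rmorphism Abar -> Q K} := @ind _ _ _ pi h Hpis hk.
have hinv : forall t, powers s t -> is_unit (h t).
  by move=> t Ht; apply: (unit_map q); apply: fs_unit.
have rinv : forall t, powers (pi s) t -> is_unit (rho t).
  move=> t [j ->]; rewrite -rmorphXn.
  have -> : rho (pi (s ^+ j)) = h (s ^+ j) by exact: ind_pi.
  apply: hinv; by exists j.
case: Hg => _ /(_ _ rho rinv) [[h0 Eh0] _] _.
case: Hf => _ /(_ _ h hinv) [_ Uniq] _.
have E := Uniq (h0 \o phi)%FUN q.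
have : (h0 \o phi)%FUN z = q z.
  apply: E => a //=.
  by rewrite Hphi Eh0; exact: ind_pi.
rewrite /= Hz rmorph0 => /esym.
by rewrite /q qmap_ker.
Qed.

Lemma ker_eq z : phi z = 0 <-> Jr z.
Proof. by split; [apply: ker_sub|apply: ker_sup]. Qed.

Lemma ipow_Jr n x : ipow Jr n x -> right_ext f (ipow I n) x.
Proof.
elim=> {n x} [x|n|n x y Hx IHx Hy|n x y _ IHx _ IHy].
- by rewrite -(mul1r x) -(rmorph1 f); constructor; constructor.
- by constructor.
- have key : forall a z, ipow I n a -> Jr z -> right_ext f (ipow I n.+1) (f a * z).
    move=> a z Ha; elim=> [|c d Hc|u v _ IHu _ IHv].
    + by rewrite mulr0; constructor.
    + by rewrite mulrA -rmorphM; constructor; constructor.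
    + by rewrite mulrDr; constructor.
  elim: IHx Hy => [|a b Ha|u v _ IHu _ IHv] Hy.
  + by rewrite mul0r; constructor.
  + by rewrite -mulrA; apply: key => //; apply: Jr_lmul.
  + by rewrite mulrDl; constructor; [apply: IHu|apply: IHv].
- by constructor.
Qed.

Lemma ker_nil : nilpotent_ideal (fun x => phi x = 0).
Proof.
have [N HN'] := HN; exists N => x Hx.
have := ipow_Jr (ipow_ext (fun y => proj1 (ker_eq y)) Hx).
elim=> [|a b Ha|u v _ IHu _ IHv].
- by [].
- by rewrite (HN' a Ha) rmorph0 mul0r.
- by rewrite IHu IHv addr0.
Qed.

Lemma ker_ideal : is_ideal (fun x => phi x = 0).
Proof.
split; first exact: rmorph0.
  by move=> x y Hx Hy; rewrite rmorphD Hx Hy addr0.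
by move=> x y Hy; rewrite !rmorphM Hy mulr0 mul0r.
Qed.

Lemma phi_surj y : exists x, phi x = y.
Proof.
case: Hg => _ _ /(_ y) [[a1 [s1 [u1 [[j ->] E1 E2 ->]]]] _].
have [x <-] := Hpis a1.
have [v [Ev1 Ev2]] := fsu j.
exists (f x * v); rewrite rmorphM Hphi; congr (_ * _).
have E3 : u1 * phi (f (s ^+ j)) = 1 by rewrite Hphi rmorphXn.
have E4 : phi (f (s ^+ j)) * phi v = 1 by rewrite -rmorphM Ev1 rmorph1.
by rewrite (inv_uniq E3 E4).
Qed.

Lemma nil_elt : exists M, forall z, phi z = 0 -> z ^+ M = 0.
Proof.
have [M HM] := ker_nil; exists M => z Hz; apply: HM; exact: pow_ipow.
Qed.

Lemma unit_iff a : is_unit (f a) <-> is_unit (g (pi a)).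
Proof.
split; first by move=> H; rewrite -Hphi; apply: unit_map.
case=> w [E1 E2]; have [v Ev] := phi_surj w.
have [M HM] := nil_elt.
have H1 : f a * v = 1 + (f a * v - 1) by rewrite addrC subrK.
have H2 : v * f a = 1 + (v * f a - 1) by rewrite addrC subrK.
have [y [Ey1 Ey2]] : is_unit (f a * v).
  rewrite H1; apply: (nil_unit (n := M)); apply: HM.
  by rewrite rmorphB rmorphM Hphi Ev E1 rmorph1 subrr.
have [y' [Ey1' Ey2']] : is_unit (v * f a).
  rewrite H2; apply: (nil_unit (n := M)); apply: HM.
  by rewrite rmorphB rmorphM Hphi Ev E2 rmorph1 subrr.
have R : f a * (v * y) = 1 by rewrite mulrA.
have L : (y' * v) * f a = 1 by rewrite -mulrA.
exists (v * y); split => //.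
by rewrite -(inv_uniq L R).
Qed.

End Main.

Unset Implicit Arguments.
Theorem lemma2p10 (A : pzRingType) (I : A -> Prop) (s : A) :
  is_ideal I -> nilpotent_ideal I -> gr_commutative I ->
  (* (1) *)
  denominator_set (powers s) /\
  forall (As : pzRingType) (f : {rmorphism A -> As}),
    ring_of_fractions (powers s) f ->
  forall (Abar : pzRingType) (pi : {rmorphism A -> Abar}),
    (forall y : Abar, exists x, pi x = y) -> (forall x, pi x = 0 <-> I x) ->
  forall (Abars : pzRingType) (g : {rmorphism Abar -> Abars}),
    ring_of_fractions (powers (pi s)) g ->
  forall phi : {rmorphism As -> Abars}, (forall x, phi (f x) = g (pi x)) ->
  (* (2) *)
  ((forall y : Abars, exists x, phi x = y) /\
   (forall x, phi x = 0 <-> right_ext f I x) /\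
   (forall x, phi x = 0 <-> left_ext f I x) /\
   is_ideal (fun x => phi x = 0) /\ nilpotent_ideal (fun x => phi x = 0)) /\
  (* (3) *)
  (forall a : A, is_unit (f a) <-> is_unit (g (pi a))).
Proof.
move=> HI HN Hgr; split.
  by have [N HN'] := HN; apply: (denom HI HN' Hgr s).
move=> As f Hf Abar pi Hpis Hpik Abars g Hg phi Hphi.
split; last by move=> a; apply: (unit_iff HI HN Hgr Hf Hpis Hpik Hg Hphi).
split; first exact: (phi_surj Hf Hpis Hg Hphi).
split; first exact: (ker_eq HI HN Hgr Hf Hpis Hpik Hg Hphi).
split.
  move=> x; rewrite (ker_eq HI HN Hgr Hf Hpis Hpik Hg Hphi).
  split; [apply: Jr_Jl|apply: Jl_Jr]; eauto.
split; first exact: ker_ideal.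
exact: (ker_nil HI HN Hgr Hf Hpis Hpik Hg Hphi).
Qed.
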